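(* Let $k,l$ be positive integers. If $\mathcal{F}\subset[k]\times[l]$ does not contain three distinct elements $\mathbf u,\mathbf v,\mathbf w$ with $\mathbf u=\mathbf v\vee\mathbf w$, then $|\mathcal{F}|\le k+l$.
   Context: For $\mathbf v,\mathbf w\in[k]\times[l]$, $\mathbf v\vee\mathbf w$ is the coordinatewise maximum of $\mathbf v$ and $\mathbf w$. *)

(* Defs.v *)
From mathcomp Require Import all_boot.
Set Implicit Arguments. Unset Strict Implicit. Unset Printing Implicit Defensive.

(* [k] x [l] is modelled as 'I_k * 'I_l (i.e. {0..k-1} x {0..l-1}; the
   shift by one is an order isomorphism, so coordinatewise max is preserved). *)
Definition vjoin (k l : nat) (v w : 'I_k * 'I_l) : 'I_k * 'I_l :=
  (if v.1 <= w.1 then w.1 else v.1, if v.2 <= w.2 then w.2 else v.2).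

(* Main.v *)
Require Import Defs.
From mathcomp Require Import all_boot.

Lemma card_rowmin (k l : nat) (F : {set 'I_k * 'I_l}) :
  #|[set u in F | [forall v in F, (v.1 == u.1) ==> (u.2 <= v.2)]]| <= k.
Proof.
set A := [set u in F | _].
rewrite -(card_in_imset (f := fun u => u.1)); first by apply: leq_trans (max_card _) _; rewrite card_ord.
move=> u u'; rewrite !inE => /andP[uF /forall_inP Hu] /andP[u'F /forall_inP Hu'] /= E.
have h1 := Hu u' u'F.
have h2' := Hu' u uF.
rewrite E eqxx /= in h1; rewrite E eqxx /= in h2'.
case: u u' E h1 h2' {Hu Hu' uF u'F} => a b [a' b'] /= -> h1 h2.
by congr pair; apply/val_inj/eqP; rewrite eqn_leq h1 h2.
Qed.

Lemma card_colmin (k l : nat) (F : {set 'I_k * 'I_l}) :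
  #|[set u in F | [forall v in F, (v.2 == u.2) ==> (u.1 <= v.1)]]| <= l.
Proof.
set A := [set u in F | _].
rewrite -(card_in_imset (f := fun u => u.2)); first by apply: leq_trans (max_card _) _; rewrite card_ord.
move=> u u'; rewrite !inE => /andP[uF /forall_inP Hu] /andP[u'F /forall_inP Hu'] /= E.
have h1 := Hu u' u'F; have h2' := Hu' u uF.
rewrite E eqxx /= in h1; rewrite E eqxx /= in h2'.
case: u u' E h1 h2' {Hu Hu' uF u'F} => a b [a' b'] /= -> h1 h2.
by congr pair; apply/val_inj/eqP; rewrite eqn_leq h1 h2.
Qed.

Theorem mainTheorem8 (k l : nat) (hk : 0 < k) (hl : 0 < l)
  (F : {set 'I_k * 'I_l}) :
  (forall u v w, u \in F -> v \in F -> w \in F ->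
     u != v -> u != w -> v != w -> u <> vjoin v w) ->
  #|F| <= k + l.
Proof.
move=> H.
set A := [set u in F | [forall v in F, (v.1 == u.1) ==> (u.2 <= v.2)]].
set B := [set u in F | [forall v in F, (v.2 == u.2) ==> (u.1 <= v.1)]].
have sub : F \subset A :|: B.
  apply/subsetP => u uF; rewrite !inE uF /=.
  apply/negPn/negP; rewrite negb_or !negb_forall_in => /andP[/exists_inP nA /exists_inP nB].
  have [v vF] := nA.
  rewrite negb_imply -ltnNge => /andP[/eqP e1 lt1].
  have [w wF] := nB.
  rewrite negb_imply -ltnNge => /andP[/eqP e2 lt2].
  apply: (H u v w uF vF wF).
  - by apply/eqP => E; rewrite E ltnn in lt1.
  - by apply/eqP => E; rewrite E ltnn in lt2.
  - by apply/eqP => E; rewrite E e2 ltnn in lt1.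
  - rewrite /vjoin e1 leqNgt lt2 /= e2 (ltnW lt1).
    by case: u {uF H nA nB e1 e2 lt1 lt2}.
apply: (leq_trans (subset_leq_card sub)).
apply: (leq_trans (leq_card_setU A B)).
by apply: leq_add; [apply: card_rowmin | apply: card_colmin].
Qed.
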